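(* The abelian group $\ell^\infty(\mathbb{Z})_S$ is uniquely divisible, i.e. it admits a (unique) structure of a $\mathbb{Q}$-vector space.
   Context: $\ell^\infty(\mathbb{Z})$ denotes the abelian group of bounded integer-valued sequences $(a_j)_{j\in\mathbb{Z}}$, $S(a_j)_j=(a_{j+1})_j$ is the shift, and $\ell^\infty(\mathbb{Z})_S=\ell^\infty(\mathbb{Z})/\{a-Sa: a\in\ell^\infty(\mathbb{Z})\}$. *)

(* Defs.v *)
From mathcomp Require Import all_boot all_order all_algebra.
Set Implicit Arguments. Unset Strict Implicit. Unset Printing Implicit Defensive.
Import Order.TTheory GRing.Theory Num.Theory.
Local Open Scope ring_scope.

Definition zseq := int -> int.

Definition linf (a : zseq) : Prop := exists M : int, forall j : int, `|a j| <= M.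

Definition shift (a : zseq) : zseq := fun j => a (j + 1).

Definition coinv_eq (a b : zseq) : Prop :=
  exists c : zseq, linf c /\ forall j, a j - b j = c j - shift c j.

Definition nmul (n : nat) (a : zseq) : zseq := fun j => a j *+ n.

(* l^oo(Z)_S is uniquely divisible: for every n >= 1, multiplication by n on
   the quotient l^oo(Z)/(1-S)l^oo(Z) is surjective and injective, written on
   representatives. *)
Definition linf_coinv_uniquely_divisible : Prop :=
  forall n : nat, (0 < n)%N ->
    (forall a, linf a -> exists2 b, linf b & coinv_eq (nmul n b) a) /\
    (forall b b', linf b -> linf b' -> coinv_eq (nmul n b) (nmul n b') -> coinv_eq b b').

(* Main.v *)
Require Import Defs.
From mathcomp Require Import all_boot all_order all_algebra.
From mathcomp Require Import zify ring lra.
Import Order.TTheory GRing.Theory Num.Theory.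
Local Open Scope ring_scope.

Lemma int_const (T : Type) (f : int -> T) :
  (forall j, f (j + 1) = f j) -> forall j, f j = f 0.
Proof.
move=> H j.
have Hp : forall k : nat, f k%:Z = f 0.
  elim=> [|k IH] //; by rewrite -IH -[k.+1]addn1 PoszD H.
have Hn : forall k : nat, f (- k%:Z) = f 0.
  elim=> [|k IH]; first by rewrite oppr0.
  rewrite -IH -(H (- k.+1%:Z)); congr f; lia.
case: j => k; first exact: Hp.
by rewrite NegzE Hn.
Qed.

Fixpoint spos (a : zseq) (k : nat) : int :=
  match k with 0%N => 0 | k'.+1 => spos a k' + a k'%:Z end.
Fixpoint sneg (a : zseq) (k : nat) : int :=
  match k with 0%N => 0 | k'.+1 => sneg a k' - a (- k'.+1%:Z) end.
Definition psum (a : zseq) (j : int) : int :=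
  if (0 <= j) then spos a (absz (j)) else sneg a (absz (j)).

Lemma psumS a j : psum a (j + 1) - psum a j = a j.
Proof.
rewrite /psum.
case: j => k.
  have -> : (0 <= Posz k + 1) = true by lia.
  have -> : (0 <= Posz k) = true by lia.
  have -> : (absz (Posz k + 1)) = k.+1 by lia.
  have -> : (absz (Posz k)) = k by lia.
  rewrite /=; ring.
rewrite NegzE.
have -> : (0 <= - k.+1%:Z) = false by lia.
have -> : (absz (- k.+1%:Z)) = k.+1 by lia.
case: k => [|k].
  have -> : (0 <= - 1%:Z + 1) = true by lia.
  have -> : (absz (- 1%:Z + 1)) = 0%N by lia.
  rewrite /=; ring.
have -> : (0 <= - k.+2%:Z + 1) = false by lia.
have -> : (absz (- k.+2%:Z + 1)) = k.+1 by lia.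
have -> : sneg a k.+2 = sneg a k.+1 - a (- k.+2%:Z) by []. ring.
Qed.

Lemma bound_div (x K N : int) : 1 <= N -> `|x * N| <= K -> `|x| <= K.
Proof.
move=> HN; rewrite normrM (ger0_norm (x:=N)) ?(le_trans _ HN) //.
move=> H; apply: le_trans H; rewrite ler_peMr //.
Qed.

Theorem proposition5p3 : linf_coinv_uniquely_divisible.
Proof.
move=> n n0; set N : int := n%:Z.
have N1 : 1 <= N by rewrite /N; lia.
have Nnz : N != 0 by apply/eqP => E; move: N1; rewrite E.
have nmE : forall b j, nmul n b j = b j * N.
  by move=> b j; rewrite /nmul /N -mulr_natr natz.
split.
- move=> a [M HM].
  pose s := psum a.
  pose b := fun j => (s (j + 1) %/ N)%Z - (s j %/ N)%Z.
  pose t := fun j => (s j %% N)%Z.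
  have tb : forall j, 0 <= t j < N.
    move=> j; rewrite /t modz_ge0 // ltz_pmod //; lia.
  have key : forall j, b j * N - a j = t j - t (j + 1).
    move=> j; rewrite -(psumS a j) -/s.
    move: (divz_eq (s (j+1)) N) (divz_eq (s j) N); rewrite /b /t.
    move: (s (j+1)) (s j) => u v.
    set q1 := (u %/ N)%Z; set q0 := (v %/ N)%Z; set r1 := (u %% N)%Z; set r0 := (v %% N)%Z.
    clearbody q1 q0 r1 r0 => -> ->; ring.
  exists b.
    exists (M + 2 * N) => j; apply: (@bound_div _ _ N) => //.
    have := key j; have := tb j; have := tb (j + 1); have := HM j.
    move: (b j * N : int) (a j : int) (t j : int) (t (j+1) : int) => x y u v; rewrite !ler_norml; lia.
  exists t; split.
    by exists N => j; have := tb j; rewrite ler_norml; lia.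
  by move=> j; rewrite nmE key.
- move=> b b' _ _ [c [[M HM] Hc]].
  have Hr : forall j, (c j %% N)%Z = (c 0 %% N)%Z.
    apply: int_const => j; apply/eqP; rewrite eqz_mod_dvd -rpredN opprB.
    have := Hc j; rewrite !nmE /shift => <-.
    rewrite -mulrBl; apply/dvdz_mull/dvdzz.
  pose d := fun j => (c j %/ N)%Z.
  exists d; split.
    exists (M + N) => j; apply: (@bound_div _ _ N) => //.
    have := divz_eq (c j) N; rewrite Hr -/(d j).
    have := HM j; have : 0 <= (c 0 %% N)%Z < N by rewrite modz_ge0 // ltz_pmod //; lia.
    move: (d j * N) => x; rewrite !ler_norml; lia.
  move=> j; apply: (mulIf Nnz); rewrite [LHS]mulrBl -[b j * N]nmE -[b' j * N]nmE Hc /shift /d.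
  move: (divz_eq (c j) N) (divz_eq (c (j+1)) N); rewrite !Hr.
  move: (c j) (c (j+1)) => u v.
  set q1 := (u %/ N)%Z; set q0 := (v %/ N)%Z; set r := (c 0 %% N)%Z.
  clearbody q1 q0 r => -> ->; ring.
Qed.
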